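(* Let $\mathbb{H}=\{z\in\mathbb{C}:\operatorname{Im}z>0\}$ and $z_1,z_2\in\mathbb{H}$. If $\operatorname{Re}(z_1)\ne\operatorname{Re}(z_2)$, put \[ \tilde z=\frac{\overline{z_1}z_1-\overline{z_2}z_2}{(z_1-z_2)+(\overline{z_1}-\overline{z_2})} \] (a real number). Then \[ b_{\mathbb{H},\infty}(z_1,z_2)=\begin{cases}\dfrac{2|\operatorname{Re}(z_1-z_2)|}{|z_1-\overline{z_2}|}, & \text{if } \min\{\operatorname{Re}z_1,\operatorname{Re}z_2\}<\tilde z<\max\{\operatorname{Re}z_1,\operatorname{Re}z_2\},\\[2mm] \dfrac{|z_1-z_2|}{\max\{\operatorname{Im}z_1,\operatorname{Im}z_2\}}, & \text{otherwise}.\end{cases} \]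
   Context: For a domain $G\subsetneq\mathbb{C}$ and $z_1,z_2\in G$, $b_{G,\infty}(z_1,z_2)=\sup_{w\in\partial G}\frac{|z_1-z_2|}{\max\{|z_1-w|,|z_2-w|\}}$; for $G=\mathbb{H}$, $\partial G=\mathbb{R}$. The ''otherwise'' case includes the case $\operatorname{Re}(z_1)=\operatorname{Re}(z_2)$. *)

(* Defs.v *)
From HB Require Import structures.
From mathcomp Require Import all_boot all_order all_algebra.
From mathcomp Require Import all_classical all_reals.
From mathcomp Require Export complex.
Set Implicit Arguments. Unset Strict Implicit. Unset Printing Implicit Defensive.
Import Order.TTheory GRing.Theory Num.Theory.
Local Open Scope ring_scope.
Local Open Scope classical_set_scope.

Definition upper_half_plane (R : realType) : set R[i] :=
  [set z | 0 < complex.Im z].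

Definition b_H_inf (R : realType) (z1 z2 : R[i]) : R :=
  sup [set ComplexField.Normc.normc (z1 - z2) / Num.max (ComplexField.Normc.normc (z1 - (w%:C)%C)) (ComplexField.Normc.normc (z2 - (w%:C)%C))
      | w in [set: R]].

(* Main.v *)
Require Import Defs.
From HB Require Import structures.
From mathcomp Require Import all_boot all_order all_algebra.
From mathcomp Require Import all_classical all_reals.
From mathcomp Require Import complex.
From mathcomp Require Import ring lra.
Import Order.TTheory GRing.Theory Num.Theory.
Local Open Scope ring_scope.
Local Open Scope classical_set_scope.

Lemma supE (R : realType) (f : R -> R) v : (exists w, f w = v) -> (forall w, f w <= v) ->
  sup [set f w | w in [set: R]] = v.
Proof.
move=> [w0 hw0] hle; apply/le_anti/andP; split.
  apply: ge_sup; first by exists (f w0), w0.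
  by move=> _ [w _ <-].
rewrite -hw0; apply: sup_upper_bound; last by exists w0.
split; first by exists (f w0), w0.
by exists v => _ [w _ <-].
Qed.

Lemma le_sqrt_sq (R : realType) (m t : R) : 0 <= m -> m ^+ 2 <= t -> m <= Num.sqrt t.
Proof.
move=> m0 h; rewrite -(ger0_norm m0) -sqrtr_sqr.
by rewrite ler_sqrt // (le_trans _ h) // sqr_ge0.
Qed.

Lemma G  (R : realType) (d1 d2 : R -> R) (N m : R) (w0 : R) :
  0 <= N -> 0 < m -> (forall w, m ^+ 2 <= d1 w \/ m ^+ 2 <= d2 w) ->
  0 <= d1 w0 -> 0 <= d2 w0 -> d1 w0 <= m ^+ 2 -> d2 w0 <= m ^+ 2 ->
  sup [set N / Num.max (Num.sqrt (d1 w)) (Num.sqrt (d2 w)) | w in [set: R]] = N / m.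
Proof.
move=> N0 m0 hlow a1 a2 b1 b2; apply: supE.
  exists w0; congr (_ / _); apply/le_anti/andP; split.
    rewrite ge_max; apply/andP; split;
    by rewrite -(ger0_norm (ltW m0)) -sqrtr_sqr ler_sqrt // sqr_ge0.
  have [h|h] := hlow w0.
    by rewrite le_max; apply/orP; left; apply: le_sqrt_sq => //; apply: ltW.
  by rewrite le_max; apply/orP; right; apply: le_sqrt_sq => //; apply: ltW.
move=> w; have hm : m <= Num.max (Num.sqrt (d1 w)) (Num.sqrt (d2 w)).
  have [h|h] := hlow w.
    by rewrite le_max; apply/orP; left; apply: le_sqrt_sq => //; apply: ltW.
  by rewrite le_max; apply/orP; right; apply: le_sqrt_sq => //; apply: ltW.
have mp : 0 < Num.max (Num.sqrt (d1 w)) (Num.sqrt (d2 w)) by apply: lt_le_trans hm.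
apply: ler_wpM2l => //; rewrite lef_pV2 //.
Qed.

Theorem theorem3p26 (R : realType) (z1 z2 : R[i]) :
  z1 \in @upper_half_plane R -> z2 \in @upper_half_plane R ->
  let zt := complex.Re ((conjc z1 * z1 - conjc z2 * z2) /
                        ((z1 - z2) + (conjc z1 - conjc z2))) in
  b_H_inf z1 z2 =
  if (complex.Re z1 != complex.Re z2) &&
     (Num.min (complex.Re z1) (complex.Re z2) < zt) &&
     (zt < Num.max (complex.Re z1) (complex.Re z2))
  then 2 * `|complex.Re (z1 - z2)| / ComplexField.Normc.normc (z1 - conjc z2)
  else ComplexField.Normc.normc (z1 - z2) / Num.max (complex.Im z1) (complex.Im z2).
Proof.
case: z1 => x1 y1; case: z2 => x2 y2.
move=> /set_mem y1p /set_mem y2p zt; rewrite /upper_half_plane /= in y1p y2p.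
have ztE : x1 != x2 -> zt = (x1 ^+ 2 + y1 ^+ 2 - x2 ^+ 2 - y2 ^+ 2) / (2 * (x1 - x2)).
  move=> hx; rewrite /zt /=.
  have -> : y1 - y2 + (- y1 - - y2) = 0 by ring.
  have hx' : x1 - x2 != 0 by rewrite subr_eq0.
  by field; rewrite hx' /=; apply: contra hx' => /eqP h; apply/eqP; lra.
rewrite /b_H_inf /=.
have N0 : 0 <= Num.sqrt ((x1 - x2) ^+ 2 + (y1 - y2) ^+ 2) by apply: sqrtr_ge0.
case: ifP => H.
- move/andP: H => [/andP [hx hmin] hmax].
  have hx' : x1 - x2 != 0 by rewrite subr_eq0.
  move: hmin hmax; rewrite (ztE hx).
  set z := _ / _ => hmin hmax.
  have zdef : z * (2 * (x1 - x2)) = x1 ^+ 2 + y1 ^+ 2 - x2 ^+ 2 - y2 ^+ 2.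
    by rewrite /z; field; rewrite hx' /=.
  have d12 : (x2 - z) ^+ 2 + (y2 - 0) ^+ 2 = (x1 - z) ^+ 2 + (y1 - 0) ^+ 2.
    apply/eqP; rewrite -subr_eq0; apply/eqP.
    have -> : (x2 - z) ^+ 2 + (y2 - 0) ^+ 2 - ((x1 - z) ^+ 2 + (y1 - 0) ^+ 2)
       = z * (2 * (x1 - x2)) - (x1 ^+ 2 + y1 ^+ 2 - x2 ^+ 2 - y2 ^+ 2) by ring.
    by rewrite zdef subrr.
  have m2p : 0 < (x1 - z) ^+ 2 + (y1 - 0) ^+ 2.
    have := sqr_ge0 (x1 - z); have : 0 < y1 ^+ 2 by rewrite exprn_gt0.
    rewrite subr0; lra.
  set m := Num.sqrt ((x1 - z) ^+ 2 + (y1 - 0) ^+ 2).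
  have mp : 0 < m by rewrite sqrtr_gt0.
  have m2 : m ^+ 2 = (x1 - z) ^+ 2 + (y1 - 0) ^+ 2 by rewrite sqr_sqrtr // ltW.
  transitivity (Num.sqrt ((x1 - x2) ^+ 2 + (y1 - y2) ^+ 2) / m).
    apply: (@G R (fun w => (x1 - w) ^+ 2 + (y1 - 0) ^+ 2) (fun w => (x2 - w) ^+ 2 + (y2 - 0) ^+ 2) _ _ z N0 mp) => /=.
    + move=> w; rewrite m2.
      have [hx12|hx12] := leP x1 x2.
        move: hmin hmax; rewrite (min_l hx12) (max_r hx12) => hmin hmax.
        have [hw|hw] := leP z w.
          by left; nra.
        by right; rewrite -d12; nra.
      move: hmin hmax; rewrite (min_r (ltW hx12)) (max_l (ltW hx12)) => hmin hmax.
      have [hw|hw] := leP z w.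
        by right; rewrite -d12; nra.
      by left; nra.
    + nra.
    + nra.
    + by rewrite m2.
    + by rewrite m2 d12.
  have Sp : 0 < (x1 - x2) ^+ 2 + (y1 - - y2) ^+ 2 by nra.
  have mne : m != 0 by rewrite gt_eqF.
  have Sne : Num.sqrt ((x1 - x2) ^+ 2 + (y1 - - y2) ^+ 2) != 0 by rewrite gt_eqF // sqrtr_gt0.
  apply/eqP; rewrite (eqr_div _ _ mne Sne); apply/eqP.
  rewrite -sqrtrM ?sqr_ge0 ?addr_ge0 ?sqr_ge0 //.
  have -> : 2 * `|x1 - x2| = `|2 * (x1 - x2)| by rewrite normrM normr_nat.
  rewrite -sqrtr_sqr /m -sqrtrM ?sqr_ge0 //; congr Num.sqrt.
  have -> : x1 - z = ((x1 - x2) ^+ 2 + y2 ^+ 2 - y1 ^+ 2) / (2 * (x1 - x2)).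
    rewrite /z; field; by rewrite hx' /=.
  by field; rewrite hx' /=.
- have Mp : 0 < Num.max y1 y2 by rewrite lt_max y1p.
  have My1 : y1 <= Num.max y1 y2 by rewrite le_max lexx.
  have My2 : y2 <= Num.max y1 y2 by rewrite le_max lexx orbT.
  have hlow : forall w, Num.max y1 y2 ^+ 2 <= (x1 - w) ^+ 2 + (y1 - 0) ^+ 2 \/
                        Num.max y1 y2 ^+ 2 <= (x2 - w) ^+ 2 + (y2 - 0) ^+ 2.
    move=> w; have [hy|hy] := leP y1 y2.
      by right; rewrite subr0; have := sqr_ge0 (x2 - w); lra.
    by left; rewrite subr0; have := sqr_ge0 (x1 - w); lra.
  have M2a : y1 ^+ 2 <= Num.max y1 y2 ^+ 2 by rewrite ler_sqr // ?nnegrE ltW.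
  have M2b : y2 ^+ 2 <= Num.max y1 y2 ^+ 2 by rewrite ler_sqr // ?nnegrE ltW.
  have [hc|hc] := leP ((x1 - x2) ^+ 2 + y2 ^+ 2) (y1 ^+ 2).
    apply: (@G R (fun w => (x1 - w) ^+ 2 + (y1 - 0) ^+ 2) (fun w => (x2 - w) ^+ 2 + (y2 - 0) ^+ 2) _ _ x1 N0 Mp hlow) => /=.
    + by rewrite addr_ge0 ?sqr_ge0.
    + by rewrite addr_ge0 ?sqr_ge0.
    + by rewrite subrr subr0; have := sqr_ge0 (x1 - x2); lra.
    + by rewrite subr0 -sqrrN opprB; lra.
  have hc2 : (x1 - x2) ^+ 2 + y1 ^+ 2 <= y2 ^+ 2.
    rewrite leNgt; apply/negP => hc2.
    set a := (x1 - x2) ^+ 2 + y2 ^+ 2 - y1 ^+ 2.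
    set b := (x1 - x2) ^+ 2 + y1 ^+ 2 - y2 ^+ 2.
    have ap : 0 < a by rewrite /a; lra.
    have bp : 0 < b by rewrite /b; lra.
    have hx : x1 != x2.
      apply/negP => /eqP e; move: ap bp; rewrite /a /b e subrr expr0n /=; lra.
    have hx' : x1 - x2 != 0 by rewrite subr_eq0.
    move: H; rewrite hx (ztE hx) /=.
    set z := _ / _.
    have e1 : x1 - z = a / (2 * (x1 - x2)).
      by rewrite /z /a; field; rewrite hx'.
    have e2 : z - x2 = b / (2 * (x1 - x2)).
      by rewrite /z /b; field; rewrite hx'.
    have [hx12|hx12] := ltP x1 x2.
      have dn : 2 * (x1 - x2) < 0 by lra.
      have : a / (2 * (x1 - x2)) < 0 by rewrite ltr_ndivrMr // mul0r.
      have : b / (2 * (x1 - x2)) < 0 by rewrite ltr_ndivrMr // mul0r.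
      rewrite -e1 -e2 => h1 h2.
      have h3 : x1 < z by lra.
      have h4 : z < x2 by lra.
      by rewrite h3 h4.
    have dn : 0 < 2 * (x1 - x2).
      by move: hx; rewrite neq_lt => /orP[h|h]; lra.
    have : 0 < a / (2 * (x1 - x2)) by rewrite divr_gt0.
    have : 0 < b / (2 * (x1 - x2)) by rewrite divr_gt0.
    rewrite -e1 -e2 => h1 h2.
    have h3 : x2 < z by lra.
    have h4 : z < x1 by lra.
    by rewrite h3 h4.
  apply: (@G R (fun w => (x1 - w) ^+ 2 + (y1 - 0) ^+ 2) (fun w => (x2 - w) ^+ 2 + (y2 - 0) ^+ 2) _ _ x2 N0 Mp hlow) => /=.
  + by rewrite addr_ge0 ?sqr_ge0.
  + by rewrite addr_ge0 ?sqr_ge0.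
  + by rewrite subr0; lra.
  + by rewrite subrr subr0; have := sqr_ge0 (x2 - x2); lra.
Qed.
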